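(* Let $m, n$ be positive integers with $m \mid n$, let $N < 2^n$ be a positive integer, and let $x < 2^m$ be an odd positive integer. Let $x_{\mathrm{minv}}$ be the inverse of $x$ modulo $2^m$. Define $z_0 = 0$ and, for $j = 0, 1, \ldots, \frac{n-2m}{m}$: $N_j = \lfloor N/2^{jm}\rfloor \bmod 2^m$; $\mathsf{ctrl}_j = \big[x_{\mathrm{minv}}\,(N_j - z_j)\big] \bmod 2^m \in [0, 2^m-1]$; $z'_j = z_j + \mathsf{ctrl}_j \cdot x$; and $z_{j+1} = \lfloor z'_j / 2^m\rfloor$. For $j = 0, 1, \ldots, \frac{n-m}{m}$ let $y_j = z_j\cdot 2^{jm} + (N \bmod 2^{jm})$. Then for all $j = 0, 1, \ldots, \frac{n-m}{m}$: (1) $y_j \equiv N \pmod{2^{jm}}$; (2) $0 \le y_j < 2^{jm}\cdot x$; (3) $y_j$ is divisible by $x$. *)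

(* Defs.v *)
From mathcomp Require Import all_boot all_algebra.
Set Implicit Arguments. Unset Strict Implicit. Unset Printing Implicit Defensive.
Import GRing.Theory Num.Theory.
Local Open Scope ring_scope.

Definition Nblk (m N j : nat) : nat := ((N %/ 2 ^ (j * m)) %% 2 ^ m)%N.

Definition ctrl (m N x xminv j : nat) (zj : int) : int :=
  ((xminv%:Z * ((Nblk m N j)%:Z - zj)) %% (2 ^ m)%N%:Z)%Z.

Fixpoint zseq (m N x xminv j : nat) : int :=
  match j with
  | 0 => 0
  | j'.+1 =>
      let zj := zseq m N x xminv j' in
      ((zj + ctrl m N x xminv j' zj * x%:Z) %/ (2 ^ m)%N%:Z)%Z
  end.

Definition yseq (m N x xminv j : nat) : int :=
  zseq m N x xminv j * (2 ^ (j * m))%N%:Z + (N %% 2 ^ (j * m))%N%:Z.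

(* Main.v *)
Require Import Defs.
From mathcomp Require Import all_boot all_algebra.
From mathcomp Require Import zify ring lra.
Import GRing.Theory Num.Theory.
Local Open Scope ring_scope.

Lemma Nmod_split (N a b : nat) : (0 < a)%N -> (0 < b)%N ->
  (N %% (a * b) = (N %/ a) %% b * a + N %% a)%N.
Proof.
move=> a0 b0.
have e1 := divn_eq N a. have e2 := divn_eq (N %/ a) b.
have h1 : (N %% a < a)%N by rewrite ltn_mod.
have h2 : ((N %/ a) %% b < b)%N by rewrite ltn_mod.
have hb : ((N %/ a) %% b * a + N %% a < a * b)%N.
  move: h1 h2; move: (N %% a)%N ((N %/ a) %% b)%N => r c h1 h2.
  have : (c * a + a <= b * a)%N by rewrite -mulSnr leq_mul2r h2 orbT.
  rewrite [(a*b)%N]mulnC; lia.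
have E : N = ((N %/ a %/ b) * (a * b) + ((N %/ a) %% b * a + N %% a))%N.
  rewrite {1}e1 {1}e2; nia.
by rewrite {1}E modnMDl modn_small.
Qed.

Lemma ctrl_bounds m N x xminv j z : (0 < m)%N ->
  0 <= ctrl m N x xminv j z < (2 ^ m)%N%:Z.
Proof.
move=> m0; rewrite /ctrl modz_ge0 ?ltz_pmod //.
  by rewrite ltz_nat expn_gt0.
by rewrite eqz_nat -lt0n expn_gt0.
Qed.

Lemma yseq_step m N x xminv j : (0 < m)%N ->
  (x * xminv = 1 %[mod 2 ^ m])%N ->
  yseq m N x xminv j.+1 = yseq m N x xminv j +
     ctrl m N x xminv j (zseq m N x xminv j) * x%:Z * (2 ^ (j * m))%N%:Z.
Proof.
move=> m0 hinv.
set M := (2 ^ m)%N%:Z.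
have M0 : 0 < M by rewrite ltz_nat expn_gt0.
set z := zseq m N x xminv j.
set c := ctrl m N x xminv j z.
set Nj := Nblk m N j.
have hmod : ((z + c * x%:Z) %% M)%Z = Nj%:Z.
  rewrite /c /ctrl -/M.
  have -> : ((z + ((xminv%:Z * (Nj%:Z - z)) %% M)%Z * x%:Z) %% M)%Z
          = ((z + (Nj%:Z - z) * (x * xminv)%N%:Z) %% M)%Z.
    rewrite -modzDmr modzMml modzDmr; congr (_ %% _)%Z; rewrite PoszM; ring.
  have hinvZ : ((x * xminv)%N%:Z %% M)%Z = (1 %% M)%Z by rewrite /M !modz_nat hinv.
  rewrite -modzDmr -modzMmr hinvZ modzMmr modzDmr.
  rewrite mulr1 addrC subrK modz_small // ltz_nat /Nj /Nblk ltn_mod expn_gt0 /=.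
  by [].
have hz : zseq m N x xminv j.+1 * M = z + c * x%:Z - Nj%:Z.
  rewrite /= -/z -/c -/M.
  by rewrite {2}(divz_eq (z + c * x%:Z) M) hmod addrK.
have NS : (N %% (2 ^ m * 2 ^ (j * m)) = Nj * 2 ^ (j * m) + N %% 2 ^ (j * m))%N.
  by rewrite mulnC Nmod_split ?expn_gt0.
rewrite /yseq mulSn expnD NS !PoszM PoszD !PoszM -/M -/z.
rewrite mulrA hz.
ring.
Qed.

Theorem lemma4p3 (m n N x xminv : nat) :
  (0 < m)%N -> (0 < n)%N -> (m %| n)%N ->
  (0 < N)%N -> (N < 2 ^ n)%N ->
  (0 < x)%N -> odd x -> (x < 2 ^ m)%N ->
  (xminv < 2 ^ m)%N -> (x * xminv = 1 %[mod 2 ^ m])%N ->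
  forall j : nat, (j <= (n - m) %/ m)%N ->
    (yseq m N x xminv j = N%:Z %[mod (2 ^ (j * m))%N%:Z])%Z /\
    0 <= yseq m N x xminv j /\
    yseq m N x xminv j < (2 ^ (j * m) * x)%N%:Z /\
    (x%:Z %| yseq m N x xminv j)%Z.
Proof.
move=> m0 _ _ _ _ x0 _ _ _ hinv j _.
split.
  by rewrite /yseq modzMDl !modz_nat modn_mod.
elim: j => [|j [IH2 [IH1 IH3]]].
  by rewrite /yseq /= mul0n expn0 modn1 mul0r addr0 mul1n ltz_nat x0 dvdz0.
rewrite yseq_step //.
have [c0 c1] := andP (ctrl_bounds m N x xminv j (zseq m N x xminv j) m0).
set c := ctrl _ _ _ _ _ _ in c0 c1 *.
set y := yseq m N x xminv j in IH1 IH2 IH3 *.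
set P := (2 ^ (j * m))%N%:Z.
have P0 : 0 < P by rewrite ltz_nat expn_gt0.
have -> : (2 ^ (j.+1 * m) * x)%N%:Z = (2 ^ m)%N%:Z * P * x%:Z
  by rewrite mulSn expnD !PoszM.
move: IH1; rewrite PoszM -/P => IH1.
have X0 : 0 < x%:Z by rewrite ltz_nat.
have cxP : 0 <= c * x%:Z * P by rewrite !mulr_ge0 // ltW.
split; first by lra.
split.
  have -> : (2 ^ m)%N%:Z * P * x%:Z = (2 ^ m)%N%:Z * (x%:Z * P) by ring.
  have -> : y + c * x%:Z * P = y + c * (x%:Z * P) by ring.
  move: IH1; rewrite (mulrC P).
  have QP : 0 < x%:Z * P by rewrite mulr_gt0.
  move: QP c0 c1 IH2; move: (x%:Z * P) ((2 ^ m)%N%:Z) => Q M.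
  move=> *; nia.
rewrite rpredD // -mulrA mulrCA.
by apply: dvdz_mulr; exact: dvdzz.
Qed.
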